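(* Let $\mathcal H$ be a non-trivial basic hereditary $\mathcal L$-property and let $\mathcal M\in\mathcal H$ be countably infinite. Then for all sufficiently large $n$, the number of $\mathcal N\in\mathcal H_n$ that are compatible with $\mathcal M$ equals $|\Omega^{\mathcal M}([n])|/|\mathrm{Aut}^*(\mathcal M)|$.
   Context: $\mathcal L$ is a finite language of relation and/or constant symbols, of arity $r$ (largest arity of a relation symbol, $0$ if none). A hereditary $\mathcal L$-property is a class of $\mathcal L$-structures closed under isomorphism and substructures; $\mathcal H_n$ is the set of its members with universe $[n]$; it is non-trivial if $\mathcal H_n\neq\emptyset$ for infinitely many $n$. For an $\mathcal L$-structure and $a,b$ in it, $a\sim b$ iff the transposition of $a,b$ (fixing all other elements) is an automorphism; $\mathcal H$ is basic if the number of $\sim$-classes of its members is uniformly bounded. Since $\mathcal M$ has finitely many $\sim$-classes, enumerate them as $A_1,\dots,A_k$ with $|A_1|\le\dots\le|A_k|$; let $t$ be the number of finite classes (so $A_1,\dots,A_t$ are exactly the finite ones) and $K=\max\{r,|A_t|\}$ (with $K=r$ if $t=0$). For a set $X$, $\Omega^{\mathcal M}(X)$ is the set of ordered partitions $(X_1,\dots,X_k)$ of $X$ with $|X_i|=|A_i|$ for $i\le t$ and $|X_i|>K$ for $t<i\le k$. An $\mathcal L$-structure $\mathcal N$ is compatible with $\mathcal M$ if there is $(B_1,\dots,B_k)\in\Omega^{\mathcal M}(N)$ such that for every atomic formula $\tau(x_1,\dots,x_s)$ and all tuples $(b_1,\dots,b_s)$ of pairwise distinct elements of $N$ and $(a_1,\dots,a_s)$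 of pairwise distinct elements of $M$ with $b_j\in B_i\iff a_j\in A_i$ for all $i,j$, we have $\mathcal N\models\tau(\bar b)$ iff $\mathcal M\models\tau(\bar a)$. $\mathrm{Aut}^*(\mathcal M)$ is the set of permutations $\sigma$ of $[k]$ for which there is an automorphism $f$ of $\mathcal M$ with $f(A_i)=A_{\sigma(i)}$ for all $i\in[k]$. *)

(* Defs.v *)
From HB Require Import structures.
From mathcomp Require Import all_boot all_order all_algebra all_fingroup.
From Stdlib Require List.

Set Implicit Arguments.
Unset Strict Implicit.
Unset Printing Implicit Defensive.

Record lang := Lang {
  lrel : finType;
  lar : lrel -> nat;
  lcst : finType }.

Definition max_arity (L : lang) : nat := (\max_(R : lrel L) lar R)%N.

Record str (L : lang) (T : Type) := Str {
  srel : forall R : lrel L, ('I_(lar R) -> T) -> Prop;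
  scst : lcst L -> T }.

Definition iso (L : lang) (T1 T2 : Type) (M1 : str L T1) (M2 : str L T2)
  (f : T1 -> T2) : Prop :=
  bijective f /\
  (forall (R : lrel L) (t : 'I_(lar R) -> T1), srel M1 t <-> srel M2 (f \o t)) /\
  (forall c : lcst L, f (scst M1 c) = scst M2 c).

Definition automorphism (L : lang) (T : Type) (M : str L T) (f : T -> T) :=
  iso M M f.

Definition substr (L : lang) (T : Type) (M : str L T) (S : T -> Prop)
  (hS : forall c, S (scst M c)) : str L {x : T | S x} :=
  @Str L {x : T | S x}
    (fun R t => srel M (fun j => proj1_sig (t j)))
    (fun c => exist S (scst M c) (hS c)).

Definition Lclass (L : lang) := forall T : Type, str L T -> Prop.

Definition hereditary (L : lang) (H : Lclass L) : Prop :=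
  (forall (T1 T2 : Type) (M1 : str L T1) (M2 : str L T2) (f : T1 -> T2),
      iso M1 M2 f -> H T1 M1 -> H T2 M2) /\
  (forall (T : Type) (M : str L T) (S : T -> Prop)
          (hS : forall c, S (scst M c)),
      (exists x, S x) -> H T M -> H _ (substr hS)).

Definition nontrivial (L : lang) (H : Lclass L) : Prop :=
  forall m : nat, exists n : nat, (m <= n)%N /\ exists N : str L 'I_n, H _ N.

Definition sim (L : lang) (T : Type) (M : str L T) (a b : T) : Prop :=
  forall f : T -> T,
    f a = b -> f b = a -> (forall x, x <> a -> x <> b -> f x = x) ->
    automorphism M f.

Definition nclasses_le (L : lang) (T : Type) (M : str L T) (B : nat) : Prop :=
  exists s : seq T, (size s <= B)%N /\
    forall x, exists y, List.In y s /\ sim M x y.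

Definition basic (L : lang) (H : Lclass L) : Prop :=
  exists B : nat, forall (T : Type) (M : str L T), H T M -> nclasses_le M B.

Definition countably_infinite (T : Type) : Prop :=
  exists e : nat -> T, bijective e.

Definition class_card (T : Type) (k : nat) (cls : T -> 'I_k) (i : 'I_k)
  (m : nat) : Prop :=
  exists s : seq T, List.NoDup s /\ size s = m /\
    forall x, cls x = i <-> List.In x s.

(* cls : M -> 'I_k enumerates the ~-classes of M as A_1,...,A_k
   (A_{i+1} = cls^-1(i)), with A_1..A_t the finite classes, of sizes sz 0, ...,
   sz (t-1), in non-decreasing order, and the remaining classes infinite. *)
Definition class_enum (L : lang) (T : Type) (M : str L T) (k t : nat)
  (cls : T -> 'I_k) (sz : nat -> nat) : Prop :=
  (forall i : 'I_k, exists x, cls x = i) /\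
  (forall x y, cls x = cls y <-> sim M x y) /\
  (t <= k)%N /\
  (forall i : 'I_k, (i < t)%N -> class_card cls i (sz i)) /\
  (forall i : 'I_k, (t <= i)%N -> ~ exists m, class_card cls i m) /\
  (forall i j : 'I_k, (i <= j)%N -> (j < t)%N -> (sz i <= sz j)%N).

(* K = max {r, |A_t|} (K = r if t = 0). *)
Definition bigK (L : lang) (t : nat) (sz : nat -> nat) : nat :=
  maxn (max_arity L) (if t is t'.+1 then sz t' else 0%N).

(* Omega^M([n]): ordered partitions (X_1..X_k) of [n], encoded by the map
   p : [n] -> [k] sending x to the index of its block. *)
Definition in_Omega (L : lang) (k t : nat) (sz : nat -> nat) (n : nat)
  (p : {ffun 'I_n -> 'I_k}) : bool :=
  [forall i : 'I_k,
     if (i < t)%N then #|[set x | p x == i]| == sz i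
     else (bigK L t sz < #|[set x | p x == i]|)%N].

Inductive term (L : lang) (s : nat) :=
  | TVar of 'I_s
  | TCst of lcst L.

Inductive atomic (L : lang) (s : nat) :=
  | AEq of term L s & term L s
  | ARel (R : lrel L) of ('I_(lar R) -> term L s).

Definition eval_term (L : lang) (T : Type) (M : str L T) (s : nat)
  (a : 'I_s -> T) (u : term L s) : T :=
  match u with TVar j => a j | TCst c => scst M c end.

Definition holds (L : lang) (T : Type) (M : str L T) (s : nat)
  (a : 'I_s -> T) (phi : atomic L s) : Prop :=
  match phi with
  | AEq u v => eval_term M a u = eval_term M a v
  | ARel R us => srel M (fun j => eval_term M a (us j))
  end.

Definition compatible (L : lang) (T : Type) (M : str L T) (k t : nat)
  (cls : T -> 'I_k) (sz : nat -> nat) (n : nat) (N : str L 'I_n) : Prop :=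
  exists p : {ffun 'I_n -> 'I_k}, in_Omega L t sz p /\
    forall (s : nat) (phi : atomic L s) (b : 'I_s -> 'I_n) (a : 'I_s -> T),
      injective b -> injective a -> (forall j, p (b j) = cls (a j)) ->
      (holds N b phi <-> holds M a phi).

Definition in_AutStar (L : lang) (T : Type) (M : str L T) (k : nat)
  (cls : T -> 'I_k) (sigma : {perm 'I_k}) : Prop :=
  exists f : T -> T, automorphism M f /\
    forall i : 'I_k,
      (forall x, cls x = i -> cls (f x) = sigma i) /\
      (forall y, cls y = sigma i -> exists x, cls x = i /\ f x = y).

(* relations: set of tagged tuples; constants: their interpretations *)
Definition fstr (L : lang) (n : nat) : finType :=
  ({set {R : lrel L & {ffun 'I_(lar R) -> 'I_n}}} * {ffun lcst L -> 'I_n})%type.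

Definition fstr_str (L : lang) (n : nat) (N : fstr L n) : str L 'I_n :=
  @Str L 'I_n
    (fun R t => Tagged (fun R => {ffun 'I_(lar R) -> 'I_n}) (finfun t) \in N.1)
    (fun c => N.2 c).

Definition Pcard (F : finType) (P : F -> Prop) (m : nat) : Prop :=
  exists S : {set F}, (forall x, x \in S <-> P x) /\ #|S| = m.

(* Main.v *)
Require Import Defs.
From HB Require Import structures.
From mathcomp Require Import all_boot all_order all_algebra all_fingroup zify.
From Stdlib Require Import Classical ClassicalEpsilon ProofIrrelevance FunctionalExtensionality.
From Stdlib Require List.

Set Implicit Arguments.
Unset Strict Implicit.
Unset Printing Implicit Defensive.


Definition pb (P : Prop) : bool :=
  if excluded_middle_informative P then true else false.
Lemma pbP (P : Prop) : pb P <-> P.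
Proof. by rewrite /pb; case: excluded_middle_informative. Qed.

Definition ET (T : Type) := T.
Definition ceq (T : Type) (x y : ET T) : bool := pb (x = y).
Lemma ceqP (T : Type) : Equality.axiom (@ceq T).
Proof. by move=> x y; apply: (iffP idP); rewrite /ceq pbP. Qed.
HB.instance Definition _ (T : Type) := hasDecEq.Build (ET T) (@ceqP T).

Lemma In_mem (X : eqType) (s : seq X) x : List.In x s <-> x \in s.
Proof.
elim: s => //= y s IH; rewrite in_cons; split.
- by case=> [->|/IH h]; [rewrite eqxx | rewrite h orbT].
- by case/orP=> [/eqP ->|/IH h]; [left|right].
Qed.

Lemma NoDup_uniq (X : eqType) (s : seq X) : List.NoDup s -> uniq s.
Proof.
elim: s => //= x s IH; move/List.NoDup_cons_iff=> [hx /IH ->]; rewrite andbT.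
by apply/negP; rewrite -In_mem.
Qed.

Lemma uniq_NoDup (X : eqType) (s : seq X) : uniq s -> List.NoDup s.
Proof.
elim: s => /= [|x s IH /andP [hx hs]]; first by constructor.
constructor; last exact: IH. by rewrite In_mem; apply/negP.
Qed.

Definition tr (X : eqType) (a b : X) (z : X) : X :=
  if z == a then b else if z == b then a else z.

Lemma trK (X : eqType) (a b : X) : cancel (tr a b) (tr a b).
Proof.
move=> z; rewrite /tr; case: (eqVneq z a) => [->|hza].
- by rewrite eqxx; case: eqVneq => // ->.
case: (eqVneq z b) => [->|hzb]; first by rewrite eqxx.
by rewrite (negPf hza) (negPf hzb).
Qed.
Lemma tr_inj (X : eqType) (a b : X) : injective (tr a b).
Proof. exact: can_inj (trK a b). Qed.
Lemma tr_a (X : eqType) (a b : X) : tr a b a = b.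
Proof. by rewrite /tr eqxx. Qed.
Lemma tr_b (X : eqType) (a b : X) : tr a b b = a.
Proof. by rewrite /tr eqxx; case: eqVneq => // ->. Qed.
Lemma tr_o (X : eqType) (a b z : X) : z <> a -> z <> b -> tr a b z = z.
Proof. by move=> /eqP ha /eqP hb; rewrite /tr (negPf ha) (negPf hb). Qed.

Lemma iso_holds (L : lang) (T1 T2 : Type) (M1 : str L T1) (M2 : str L T2) f
  s (a : 'I_s -> T1) (phi : atomic L s) :
  iso M1 M2 f -> (holds M2 (f \o a) phi <-> holds M1 a phi).
Proof.
move=> [[g fK gK] [hr hc]].
have ev u : eval_term M2 (f \o a) u = f (eval_term M1 a u).
  by case: u => //= c; rewrite hc.
case: phi => [u v|R us] /=.
- rewrite !ev; split=> [h|->//]; exact: (can_inj fK).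
- have -> : (fun j => eval_term M2 (f \o a) (us j)) =
            f \o (fun j => eval_term M1 a (us j)).
    by apply: functional_extensionality => j; rewrite ev.
  by rewrite -hr.
Qed.

Lemma aut_tr_iso (L : lang) (X : eqType) (M : str L X) (a b : X) :
  (forall R (w : 'I_(lar R) -> X), srel M w -> srel M (tr a b \o w)) ->
  (forall c, tr a b (scst M c) = scst M c) ->
  automorphism M (tr a b).
Proof.
move=> hr hc; split; first exact: (Bijective (trK a b) (trK a b)).
split=> // R w; split; first exact: hr.
move/hr; congr (srel M _); apply: functional_extensionality => j /=.
by rewrite trK.
Qed.

Lemma ext_fin (n s k : nat) (c : 'I_s -> 'I_k) (q : 'I_n -> 'I_k) :
 (forall i, #|[set j | c j == i]| <= #|[set x | q x == i]|) ->
 forall (J : {set 'I_s}) (b0 : 'I_s -> 'I_n),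
 {in J &, injective b0} -> (forall j, j \in J -> q (b0 j) = c j) ->
 exists b : 'I_s -> 'I_n, injective b /\ (forall j, q (b j) = c j) /\
   (forall j, j \in J -> b j = b0 j).
Proof.
move=> hc J b0.
move: {2}#|~: J| (erefl #|~: J|) => m; elim: m J b0 => [|m IH] J b0 hm hinj hq.
  have JT : forall j, j \in J.
    move=> j; apply/negPn; rewrite -in_setC; move/eqP: hm; rewrite cards_eq0.
    by move/eqP=> ->; rewrite in_set0.
  exists b0; split; last split => //.
  - by move=> x y; apply: hinj; apply: JT.
  - by move=> j; apply: hq; apply: JT.
have : 0 < #|~: J| by rewrite hm.
case/card_gt0P=> j; rewrite in_setC => hjJ.
set i := c j.
set C := [set j' | c j' == i].
set U := b0 @: (J :&: C).
set B := [set x | q x == i].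
have hU : #|U| < #|B|.
  apply: (leq_ltn_trans (leq_imset_card _ _)).
  apply: (leq_trans _ (hc i)).
  have : j |: (J :&: C) \subset C.
    by apply/subsetP=> x; rewrite !inE; case/orP=> [/eqP ->|/andP [_ ->]] //.
  move/subset_leq_card; rewrite cardsU1 inE (negPf hjJ) /=.
  by rewrite add1n.
have : ~~ (B \subset U).
  by apply/negP=> /subset_leq_card; rewrite leqNgt hU.
case/subsetPn=> y; rewrite inE => /eqP yB yU.
pose b1 := fun j' => if j' == j then y else b0 j'.
have [b [bi [bq bJ]]] : exists b : 'I_s -> 'I_n, injective b /\
   (forall j, q (b j) = c j) /\ (forall j', j' \in j |: J -> b j' = b1 j').
  apply: IH.
  - move: hm; rewrite (cardsD1 j) inE hjJ /= add1n => -[<-].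
    by congr #|_|; rewrite setCU setDE setIC.
  - move=> x1 x2; rewrite !inE /b1.
    case: (eqVneq x1 j) => [->|h1]; case: (eqVneq x2 j) => [->|h2] //= h1J h2J.
    + move=> e; move: yU; rewrite e; move: (hq _ h2J) => hq2.
      by case/imsetP; exists x2 => //; rewrite !inE h2J /= -hq2 -e yB /=.
    + move=> e; move: yU; rewrite -e; move: (hq _ h1J) => hq1.
      by case/imsetP; exists x1 => //; rewrite !inE h1J /= -hq1 e yB /=.
    + exact: hinj.
  - move=> j'; rewrite !inE /b1; case: (eqVneq j' j) => [->|h] /=.
      by rewrite yB.
    exact: hq.
exists b; split=> //; split=> // j' hj'.
rewrite bJ ?inE ?hj' ?orbT // /b1; case: eqVneq => // e.
by move: hjJ; rewrite -e hj'.
Qed.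

Lemma card_count (F : finType) (P : pred F) : #|[set x | P x]| = count P (enum F).
Proof. by rewrite cardsE /= -sum1_card -sum1_count big_enum_cond. Qed.

Lemma decomp (X : eqType) r (w : 'I_r -> X) (ex : seq X) :
 exists s (a : 'I_s -> X) (idx : 'I_r -> 'I_s),
   injective a /\ (forall j, w j = a (idx j)) /\
   (forall z, z \in ex -> exists j, a j = z) /\
   (forall P : pred X, #|[set j | P (a j)]| <= count P ex + #|[set j | P (w j)]|).
Proof.
pose l := undup (ex ++ map w (enum 'I_r)).
have ul : uniq l by apply: undup_uniq.
pose a := fun j : 'I_(size l) => tnth (in_tuple l) j.
have inl j : w j \in l.
  by rewrite /l mem_undup mem_cat; apply/orP; right; apply: map_f; rewrite mem_enum.
have hidx j : index (w j) l < size l by rewrite index_mem.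
exists (size l), a, (fun j => Ordinal (hidx j)); split; last split; last split.
- move=> x y; pose x0 := tnth (in_tuple l) x.
  rewrite /a !(tnth_nth x0) /= => e.
  by apply: val_inj; apply/eqP; rewrite -(nth_uniq x0 (ltn_ord x) (ltn_ord y) ul) e.
- by move=> j; rewrite /a (tnth_nth (w j)) /= nth_index.
- move=> z zex; have zl : z \in l by rewrite /l mem_undup mem_cat zex.
  have hz : index z l < size l by rewrite index_mem.
  by exists (Ordinal hz); rewrite /a (tnth_nth z) /= nth_index.
- move=> P; rewrite !card_count -count_map.
  have -> : [seq a i | i <- enum 'I_(size l)] = l.
    by rewrite /a map_tnth_enum.
  apply: (leq_trans (count_undup _ _)).
  by rewrite count_cat count_map.
Qed.

Lemma enum_unb (D : pred nat) : (forall N0, exists m, (N0 <= m) && D m) ->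
 exists en : nat -> nat, (forall k, D (en k)) /\ (forall k, en k < en k.+1) /\
   (forall m, D m -> exists k, en k = m).
Proof.
move=> hD; pose nxt N0 := ex_minn (hD N0).
have nxtP N0 : (N0 <= nxt N0) && D (nxt N0) by rewrite /nxt; case: ex_minnP.
have nxtm N0 m : (N0 <= m) && D m -> nxt N0 <= m.
  by rewrite /nxt; case: ex_minnP => x _ h; apply: h.
pose en := fix en k := if k is k'.+1 then nxt (en k').+1 else nxt 0.
have hDen k : D (en k) by case: k => [|k] /=; [case/andP: (nxtP 0) | case/andP: (nxtP (en k).+1)].
have hinc k : en k < en k.+1 by rewrite /=; case/andP: (nxtP (en k).+1).
exists en; split=> //; split=> // m Dm.
have mono k : k <= en k.
  elim: k => // k IH; apply: (leq_ltn_trans IH (hinc k)).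
have ex0 : exists k, en k <= m by exists 0; apply: nxtm; rewrite Dm.
have bnd i : en i <= m -> i <= m by move=> h; apply: leq_trans (mono i) h.
case: (ex_maxnP ex0 bnd) => km hkm hmax.
exists km; apply/eqP; rewrite eqn_leq hkm /=; rewrite leqNgt; apply/negP => hlt.
have : en km.+1 <= m by apply: nxtm; rewrite hlt Dm.
by move/hmax; rewrite ltnn.
Qed.

Section Main.
Variables (L : lang) (T : Type) (M : str L T) (k t : nat) (cls : T -> 'I_k)
  (sz : nat -> nat).
Hypothesis henum : class_enum M t cls sz.
Variable e0 : nat -> T.
Hypothesis he0 : bijective e0.

Local Notation X := (ET T).
Local Notation K := (bigK L t sz).

Lemma cls_surj i : exists x, cls x = i.
Proof. by case: henum. Qed.
Lemma cls_sim x y : cls x = cls y <-> sim M x y.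
Proof. by case: henum => _ []. Qed.
Lemma tk : t <= k.
Proof. by case: henum => _ [_ []]. Qed.
Lemma fin_card (i : 'I_k) : i < t -> class_card cls i (sz i).
Proof. by case: henum => _ [_ [_ []]] h _; apply: h. Qed.
Lemma inf_card (i : 'I_k) : t <= i -> ~ exists m, class_card cls i m.
Proof. by case: henum => _ [_ [_ [_ []]]] h _; apply: h. Qed.
Lemma sz_mono (i j : 'I_k) : i <= j -> j < t -> sz i <= sz j.
Proof. by case: henum => _ [_ [_ [_ [_ h]]]]; apply: h. Qed.

Lemma tr_aut (a b : X) : cls a = cls b -> automorphism M (tr a b).
Proof.
move/cls_sim=> h; apply: h; [exact: (@tr_a X) | exact: (@tr_b X) | exact: (@tr_o X)].
Qed.

Lemma tr_cls (a b z : X) : cls a = cls b -> cls (tr a b z) = cls z.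
Proof.
move=> hab; rewrite /tr; case: eqVneq => [->|_]; first by rewrite hab.
by case: eqVneq => [->|_].
Qed.

Lemma PL s (a a' : 'I_s -> X) phi : injective a -> injective a' ->
  (forall j, cls (a j) = cls (a' j)) -> (holds M a phi <-> holds M a' phi).
Proof.
move=> ia ia' hc.
move: {2}#|[set j | a j != a' j]| (leqnn #|[set j | a j != a' j]|) => m.
elim: m a ia hc => [|m IH] a ia hc hm.
  have -> : a = a' => //.
  apply: functional_extensionality => j; apply/eqP; apply/negPn/negP => h.
  by move: hm; rewrite leqn0 cards_eq0 => /eqP/setP/(_ j); rewrite !inE h.
case: (boolP [exists j, a j != a' j]); last first.
  move=> /existsPn h; have -> : a = a' => //.
  by apply: functional_extensionality => j; apply/eqP/negPn/h.
case/existsP=> j hj.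
pose tau := tr (a j) (a' j).
have htau : automorphism M tau by apply: tr_aut.
rewrite -(iso_holds a phi htau); apply: IH.
- by move=> x y /= /tr_inj /ia.
- by move=> j' /=; rewrite tr_cls.
- apply: leq_trans _ (_ : #|[set j | a j != a' j] :\ j| <= m).
    apply: subset_leq_card; apply/subsetP=> j'; rewrite !inE /= => hj'.
    have hjj : j' != j.
      by apply: contraNneq hj' => ->; rewrite /tau tr_a.
    rewrite hjj /=; move: hj'; rewrite /tau /tr.
    case: (eqVneq (a j') (a j)) => [/ia e|_]; first by rewrite e eqxx in hjj.
    case: (eqVneq (a j') (a' j)) => // ->.
    by move=> _; apply: contra hjj => /eqP /ia' ->.
  by move: hm; rewrite (cardsD1 j) inE hj add1n ltnS.
Qed.

Lemma const_class c (z : X) : cls z = cls (scst M c) -> z = scst M c.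
Proof.
move=> h; have := tr_aut h; case=> _ [_ /(_ c)].
by rewrite tr_b => ->.
Qed.

Lemma class_card_uniq i m1 m2 :
  class_card cls i m1 -> class_card cls i m2 -> m1 = m2.
Proof.
move=> [s1 [n1 [<- h1]]] [s2 [n2 [<- h2]]].
apply/eqP; rewrite eqn_leq; apply/andP; split.
- apply/leP; apply: (List.NoDup_incl_length n1) => x /h1 /h2 //.
- apply/leP; apply: (List.NoDup_incl_length n2) => x /h2 /h1 //.
Qed.

Lemma fin_pos (i : 'I_k) : i < t -> 0 < sz i.
Proof.
move/fin_card=> [s [_ [<- h]]]; case: (cls_surj i) => x /h.
by case: s {h}.
Qed.

Lemma sz_le_K (i : 'I_k) : i < t -> sz i <= K.
Proof.
rewrite /bigK; case: t sz_mono tk => // t' hm htk hi.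
apply: leq_trans (leq_maxr _ _).
have ht' : t' < k by [].
exact: (hm i (Ordinal ht')).
Qed.

Lemma ar_le_K (R : lrel L) : lar R <= K.
Proof. by apply: leq_trans (leq_maxl _ _); rewrite /max_arity (leq_bigmax R). Qed.

Lemma unbounded (i : 'I_k) : t <= i ->
  forall N0, exists m, (N0 <= m) && (cls (e0 m) == i).
Proof.
move=> hi N0; apply: NNPP => hne.
have hall m : N0 <= m -> cls (e0 m) != i.
  move=> hm; apply/negP => /eqP hc; apply: hne; exists m; by rewrite hm hc eqxx.
case: he0 => einv ek ke.
have e0i : injective (e0 : nat -> X) by apply: can_inj ek.
pose s : seq X := [seq z <- map (e0 : nat -> X) (iota 0 N0) | cls z == i].
apply: (inf_card hi); exists (size s); exists s; split; [|split=>//].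
- by apply: (@uniq_NoDup X); rewrite filter_uniq // map_inj_uniq ?iota_uniq.
- move=> x; rewrite (@In_mem X) mem_filter; split.
  + move=> hx; rewrite hx eqxx /=; rewrite -(ke x); apply: map_f.
    rewrite mem_iota /= add0n ltnNge; apply/negP=> /hall.
    by rewrite ke hx eqxx.
  + by case/andP=> /eqP.
Qed.

Lemma inf_enum (i : 'I_k) : t <= i ->
  exists b : nat -> X, injective b /\ forall z, cls z = i <-> exists m, b m = z.
Proof.
move=> hi; case: (enum_unb (unbounded hi)) => en [hD [hinc hsur]].
have hlt a b : a < b -> en a < en b.
  elim: b => // b IH; rewrite ltnS leq_eqVlt => /orP [/eqP ->|/IH h] //.
  exact: ltn_trans h (hinc b).
have eninj : injective en.
  by move=> a b e; case: (ltngtP a b) => // /hlt; rewrite e ltnn.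
case: he0 => einv ek ke.
have e0i : injective (e0 : nat -> X) by apply: can_inj ek.
exists (fun m => (e0 (en m) : X)); split.
- by move=> a b /e0i /eninj.
- move=> z; split.
  + move=> hz; have : cls (e0 (einv z)) == i by rewrite ke hz.
    by case/hsur => m hm; exists m; rewrite hm ke.
  + by case=> m <-; apply/eqP; apply: hD.
Qed.

Lemma class_list (i : 'I_k) m : exists l : seq X, uniq l /\
  (forall z, z \in l -> cls z = i) /\ (i < t -> size l = sz i) /\
  (t <= i -> size l = m).
Proof.
case: (ltnP i t) => hi.
- case: (fin_card hi) => s [nd [hs h]]; exists s; split; first exact: (@NoDup_uniq X).
  split; first by move=> z /(@In_mem X) /h.
  by split=> // h'; move: hi; rewrite ltnNge h'.
- case: (inf_enum hi) => b [bi hb]; exists (map b (iota 0 m)).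
  split; first by rewrite map_inj_uniq ?iota_uniq.
  split; first by move=> z /mapP [x _ ->]; apply/hb; exists x.
  by rewrite size_map size_iota; split=> // h'; move: h'; rewrite ltnNge hi.
Qed.

Lemma classbij (i j : 'I_k) : (i < t) = (j < t) -> (i < t -> sz i = sz j) ->
  exists h : X -> X, (forall z : X, cls z = i -> cls (h z) = j) /\
    (forall z z' : X, cls z = i -> cls z' = i -> h z = h z' -> z = z') /\
    (forall y : X, cls y = j -> exists z : X, cls z = i /\ h z = y).
Proof.
move=> hij hsz; case: (ltnP i t) => hi.
- have hj : j < t by rewrite -hij.
  case: (fin_card hi) => si [ndi [hsi hi']].
  case: (fin_card hj) => sj [ndj [hsj hj']].
  have ui : uniq (si : seq X) by apply: (@NoDup_uniq X).
  have uj : uniq (sj : seq X) by apply: (@NoDup_uniq X).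
  have mi (z : X) : cls z = i <-> z \in (si : seq X) by rewrite -(@In_mem X).
  have mj (z : X) : cls z = j <-> z \in (sj : seq X) by rewrite -(@In_mem X).
  have ssz : size si = size sj by rewrite hsi hsj hsz.
  exists (fun z : X => nth z (sj : seq X) (index z (si : seq X))); split; last split.
  + move=> z /mi hz; apply/mj; apply: mem_nth; rewrite -ssz index_mem //.
  + move=> z z' /mi hz /mi hz'.
    rewrite (set_nth_default z') ?(ssz, index_mem) -?ssz ?index_mem //.
    move/eqP; rewrite nth_uniq ?(ssz, index_mem) -?ssz ?index_mem // => /eqP e.
    rewrite -(@nth_index X z z si hz) e (set_nth_default z') ?index_mem //.
    exact: (@nth_index X z' z' si hz').
  + move=> y /mj hy.
    have hiy : index y sj < size si by rewrite ssz index_mem.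
    exists (nth y si (index y sj)); split.
      by apply/mi; apply: mem_nth.
    rewrite (index_uniq y hiy ui).
    by rewrite (set_nth_default y) ?nth_index // -ssz.
- have hj : t <= j by rewrite leqNgt -hij -leqNgt.
  case: (inf_enum hi) => bi [bii hbi].
  case: (inf_enum hj) => bj [bji hbj].
  have exinv (z : X) : exists m, cls z = i -> bi m = z.
    case: (classic (cls z = i)) => [/hbi [m hm]|hn]; first by exists m.
    by exists 0.
  pose inv z := proj1_sig (constructive_indefinite_description _ (exinv z)).
  have invP z : cls z = i -> bi (inv z) = z.
    exact: (proj2_sig (constructive_indefinite_description _ (exinv z))).
  exists (fun z => bj (inv z)); split; last split.
  + by move=> z _; apply/hbj; exists (inv z).
  + by move=> z z' hz hz' /bji e; rewrite -(invP _ hz) -(invP _ hz') e.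
  + move=> y /hbj [m hm]; exists (bi m).
    have hc : cls (bi m) = i by apply/hbi; exists m.
    by split=> //; rewrite -hm; congr bj; apply: bii; rewrite invP.
Qed.

Lemma autstar_class (sg : {perm 'I_k}) j m : in_AutStar M cls sg ->
  class_card cls j m -> class_card cls (sg j) m.
Proof.
case=> f [[[g fg gf] _] hf] [s [nd [hs h]]].
have finj : injective (f : X -> X) by apply: can_inj fg.
exists (map (f : X -> X) (s : seq X)); split; last split.
- by apply: (@uniq_NoDup X); rewrite map_inj_uniq //; apply: (@NoDup_uniq X).
- by rewrite size_map.
- move=> z; rewrite (@In_mem X); split.
  + case/(proj2 (hf j)) => x [/h /(@In_mem X) hx <-]; exact: map_f.
  + by case/mapP=> x /(@In_mem X) /h hx ->; apply: (proj1 (hf j)).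
Qed.

Lemma autstar_class_inv (sg : {perm 'I_k}) j m : in_AutStar M cls sg ->
  class_card cls (sg j) m -> class_card cls j m.
Proof.
case=> f [[[g fg gf] _] hf] [s [nd [hs h]]].
have ginj : injective (g : X -> X) by apply: can_inj gf.
exists (map (g : X -> X) (s : seq X)); split; last split.
- by apply: (@uniq_NoDup X); rewrite map_inj_uniq //; apply: (@NoDup_uniq X).
- by rewrite size_map.
- move=> z; rewrite (@In_mem X); split.
  + move=> hz; rewrite -(fg z); apply: map_f; apply/(@In_mem X)/h.
    exact: (proj1 (hf j)).
  + case/mapP=> y /(@In_mem X) /h hy ->.
    case: (proj2 (hf j) y hy) => x [hx <-]; by rewrite fg.
Qed.

Variable n : nat.
Hypothesis hn : 0 < n.

Lemma block_fin (p : {ffun 'I_n -> 'I_k}) (i : 'I_k) : in_Omega L t sz p ->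
  i < t -> #|[set x | p x == i]| = sz i.
Proof. by move=> /forallP /(_ i) h hi; rewrite hi in h; apply/eqP. Qed.

Lemma block_inf (p : {ffun 'I_n -> 'I_k}) (i : 'I_k) : in_Omega L t sz p ->
  t <= i -> K < #|[set x | p x == i]|.
Proof. by move=> /forallP /(_ i) h hi; rewrite ltnNge hi in h. Qed.

Lemma block_ne (p : {ffun 'I_n -> 'I_k}) (i : 'I_k) : in_Omega L t sz p ->
  exists x, p x = i.
Proof.
move=> hp; have : 0 < #|[set x | p x == i]|.
  case: (ltnP i t) => hi; first by rewrite block_fin // fin_pos.
  exact: leq_ltn_trans (leq0n _) (block_inf hp hi).
by case/card_gt0P=> x; rewrite inE => /eqP; exists x.
Qed.

Lemma emb_ex (p : {ffun 'I_n -> 'I_k}) : exists e : 'I_n -> X,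
  in_Omega L t sz p -> injective e /\ forall x, cls (e x) = p x.
Proof.
case: (boolP (in_Omega L t sz p)) => hp; last by exists (fun _ => e0 0).
have hl i : exists l : seq X, uniq l /\ (forall z, z \in l -> cls z = i) /\
    #|[set x | p x == i]| <= size l.
  case: (class_list i n) => l [ul [hl [h1 h2]]]; exists l; split=>//; split=>//.
  case: (ltnP i t) => hi; first by rewrite block_fin // h1.
  by rewrite h2 //; apply: leq_trans (max_card _) _; rewrite card_ord.
pose lf i := proj1_sig (constructive_indefinite_description _ (hl i)).
have lfP i : uniq (lf i) /\ (forall z, z \in lf i -> cls z = i) /\
    #|[set x | p x == i]| <= size (lf i).
  exact: (proj2_sig (constructive_indefinite_description _ (hl i))).
exists (fun x => nth (e0 0 : X) (lf (p x)) (index x (enum [set y | p y == p x]))).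
move=> _.
have hin x : index x (enum [set y | p y == p x]) < size (lf (p x)).
  case: (lfP (p x)) => _ [_ hs]; apply: leq_trans hs.
  by rewrite cardE index_mem mem_enum inE.
have hcls x : cls (nth (e0 0 : X) (lf (p x)) (index x (enum [set y | p y == p x]))) = p x.
  by case: (lfP (p x)) => _ [h _]; apply: h; apply: mem_nth.
split=> // x y e.
have hxy : p x = p y by rewrite -(hcls x) -(hcls y) e.
move: e (hin x) (hin y); rewrite hxy => e hx hy.
move/eqP: e; rewrite (nth_uniq _ hx hy (proj1 (lfP (p y)))) => /eqP ei.
have mx : x \in enum [set z | p z == p y] by rewrite mem_enum inE hxy.
have my : y \in enum [set z | p z == p y] by rewrite mem_enum inE.
have h1 := nth_index y mx; rewrite ei (nth_index y my) in h1.
by rewrite h1.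
Qed.

Definition ep (p : {ffun 'I_n -> 'I_k}) : 'I_n -> X :=
  proj1_sig (constructive_indefinite_description _ (emb_ex p)).
Lemma epP p : in_Omega L t sz p -> injective (ep p) /\ forall x, cls (ep p x) = p x.
Proof. exact: (proj2_sig (constructive_indefinite_description _ (emb_ex p))). Qed.
Lemma ep_inj p : in_Omega L t sz p -> injective (ep p).
Proof. by case/epP. Qed.
Lemma ep_cls p x : in_Omega L t sz p -> cls (ep p x) = p x.
Proof. by case/epP=> _; apply. Qed.

Definition x0 : 'I_n := Ordinal hn.
Definition cst p (c : lcst L) : 'I_n := odflt x0 [pick x | ep p x == scst M c].
Lemma ep_cst p c : in_Omega L t sz p -> ep p (cst p c) = scst M c.
Proof.
move=> hp; case: (block_ne (cls (scst M c)) hp) => x hx.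
have ex : ep p x = scst M c by apply: const_class; rewrite ep_cls.
rewrite /cst; case: pickP => [y /eqP //|h].
by move: (h x); rewrite ex eqxx.
Qed.

Definition Np (p : {ffun 'I_n -> 'I_k}) : fstr L n :=
  ([set u : {R : lrel L & {ffun 'I_(lar R) -> 'I_n}} |
     pb (srel M (fun j => ep p (tagged u j)))], [ffun c => cst p c]).

Lemma Np_srel p (R : lrel L) (w : 'I_(lar R) -> 'I_n) :
  srel (fstr_str (Np p)) w <-> srel M (fun j => ep p (w j)).
Proof.
rewrite /= inE pbP /=.
by have -> : (fun j => ep p (finfun w j)) = (fun j => ep p (w j))
  by apply: functional_extensionality => j; rewrite ffunE.
Qed.

Lemma Np_cst p c : scst (fstr_str (Np p)) c = cst p c.
Proof. by rewrite /= ffunE. Qed.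

Lemma Np_holds p s (b : 'I_s -> 'I_n) phi : in_Omega L t sz p ->
  (holds (fstr_str (Np p)) b phi <-> holds M (fun j => ep p (b j)) phi).
Proof.
move=> hp.
have ev u : ep p (eval_term (fstr_str (Np p)) b u) =
            eval_term M (fun j => ep p (b j)) u.
  by case: u => //= c; rewrite ffunE ep_cst.
case: phi => [u v|R us].
- rewrite /= -!ev; split=> [->//|]; exact: ep_inj.
- change (srel (fstr_str (Np p)) (fun j => eval_term (fstr_str (Np p)) b (us j))
    <-> srel M (fun j => eval_term M (fun j0 => ep p (b j0)) (us j))).
  rewrite Np_srel.
  by have -> : (fun j => ep p (eval_term (fstr_str (Np p)) b (us j))) =
    (fun j => eval_term M (fun j0 => ep p (b j0)) (us j))
    by apply: functional_extensionality => j; rewrite ev.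
Qed.

Lemma Np_compat0 p s (b : 'I_s -> 'I_n) (a : 'I_s -> X) phi :
  in_Omega L t sz p -> injective b -> injective a ->
  (forall j, p (b j) = cls (a j)) ->
  (holds (fstr_str (Np p)) b phi <-> holds M a phi).
Proof.
move=> hp ib ia hc; rewrite Np_holds //; apply: PL => //.
- by move=> x y /(ep_inj hp) /ib.
- by move=> j; rewrite ep_cls.
Qed.

Lemma Np_compat p : in_Omega L t sz p -> compatible M t cls sz (fstr_str (Np p)).
Proof.
move=> hp; exists p; split=> // s phi b a ib ia hc.
exact: (@Np_compat0 p s b (a : 'I_s -> X)).
Qed.

Lemma count_fin s (a : 'I_s -> X) (i : 'I_k) : injective a -> i < t ->
  #|[set j | cls (a j) == i]| <= sz i.
Proof.
move=> ia hi; case: (fin_card hi) => l [nd [hl h]].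
rewrite -hl cardE -(size_map a).
apply: uniq_leq_size; first by rewrite map_inj_uniq ?enum_uniq.
move=> z /mapP [j]; rewrite mem_enum inE => /eqP hj ->.
by apply/(@In_mem X)/h.
Qed.

Variable H : Lclass L.
Hypothesis hH : hereditary H.
Hypothesis hM : H M.

Lemma Np_H p : in_Omega L t sz p -> H (fstr_str (Np p)).
Proof.
move=> hp; case: hH => hiso hsub.
pose S := fun z : T => exists x, ep p x = z.
have hS : forall c, S (scst M c) by move=> c; exists (cst p c); rewrite ep_cst.
have HS := hsub _ M S hS (ex_intro _ (ep p x0) (ex_intro _ x0 erefl)) hM.
pose g := fun z : {z : T | S z} =>
  proj1_sig (constructive_indefinite_description _ (proj2_sig z)).
have gP z : ep p (g z) = proj1_sig z.
  exact: (proj2_sig (constructive_indefinite_description _ (proj2_sig z))).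
apply: (hiso _ _ _ _ g _ HS); split; last split.
- pose h := fun x => exist S (ep p x) (ex_intro _ x erefl).
  exists h.
  + move=> z; apply: eq_sig_hprop; first by move=> *; apply: proof_irrelevance.
    by rewrite /= gP.
  + by move=> x; apply: (ep_inj hp); rewrite gP.
- move=> R w; rewrite Np_srel /=.
  by have -> : (fun j => ep p (g (w j))) = (fun j => proj1_sig (w j))
    by apply: functional_extensionality => j; rewrite gP.
- by move=> c; rewrite Np_cst; apply: (ep_inj hp); rewrite gP ep_cst.
Qed.

Lemma C1 (N : fstr L n) p : in_Omega L t sz p ->
  (forall s phi (b : 'I_s -> 'I_n) (a : 'I_s -> X), injective b -> injective a ->
     (forall j, p (b j) = cls (a j)) ->
     (holds (fstr_str N) b phi <-> holds M a phi)) -> N = Np p.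
Proof.
move=> hp; case: N => N1 N2 hc.
have hc' s phi (b : 'I_s -> 'I_n) : injective b ->
    (holds (fstr_str (N1, N2)) b phi <-> holds (fstr_str (Np p)) b phi).
  move=> ib; rewrite (hc s phi b (fun j => ep p (b j))) //.
  - by rewrite Np_holds.
  - by move=> x y /(ep_inj hp) /ib.
  - by move=> j; rewrite ep_cls.
congr pair.
- apply/setP => -[R w].
  pose wf := fun j => w j.
  case: (decomp wf [::]) => s [b [idx [ib [hw _]]]].
  have key : srel (fstr_str (N1, N2)) wf <-> srel (fstr_str (Np p)) wf.
    have e : wf = (fun j => b (idx j)) by apply: functional_extensionality.
    rewrite e; exact: (hc' s (@ARel L s R (fun j => TVar L (idx j))) b ib).
  have fw : finfun wf = w by apply/ffunP => j; rewrite ffunE.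
  move: key; rewrite /= fw => key.
  by apply/idP/idP => /key.
- apply/ffunP => c; have -> : (Np p).2 c = cst p c by rewrite /Np ffunE.
  have i1 : injective (fun _ : 'I_1 => N2 c) by move=> x y _; rewrite !ord1.
  have i2 : injective (fun _ : 'I_1 => ep p (N2 c) : X).
    by move=> x y _; rewrite !ord1.
  have := hc 1 (AEq (TVar L ord0) (TCst 1 c)) _ _ i1 i2.
  case=> [j|h _]; first by rewrite ep_cls.
  have := h erefl; rewrite /= => e.
  by apply: (ep_inj hp); rewrite e ep_cst.
Qed.

Lemma ep_tr p (x y z : 'I_n) : in_Omega L t sz p ->
  ep p (tr x y z) = tr (ep p x : X) (ep p y) (ep p z).
Proof.
move=> hp; rewrite /tr; case: (eqVneq z x) => [->|hzx]; first by rewrite eqxx.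
have h1 : (ep p z : X) != ep p x by apply: contra hzx => /eqP /(ep_inj hp) ->.
rewrite (negPf h1); case: (eqVneq z y) => [->|hzy]; first by rewrite eqxx.
have h2 : (ep p z : X) != ep p y by apply: contra hzy => /eqP /(ep_inj hp) ->.
by rewrite (negPf h2).
Qed.

Lemma L1a p (x y : 'I_n) : in_Omega L t sz p -> p x = p y ->
  automorphism (fstr_str (Np p)) (tr x y).
Proof.
move=> hp hxy; apply: aut_tr_iso.
- move=> R w; rewrite !Np_srel.
  have ha : automorphism M (tr (ep p x : X) (ep p y)).
    by apply: tr_aut; rewrite !ep_cls.
  case: ha => _ [hr _] /(hr R) h.
  have -> : (fun j => ep p ((tr x y \o w) j)) =
            (tr (ep p x : X) (ep p y)) \o (fun j => ep p (w j)).
    by apply: functional_extensionality => j /=; rewrite ep_tr.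
  exact: h.
- move=> c; rewrite Np_cst.
  have hcc z : p z = p (cst p c) -> z = cst p c.
    move=> hz; apply: (ep_inj hp); rewrite ep_cst //; apply: const_class.
    by rewrite ep_cls // hz -(ep_cls (cst p c) hp) ep_cst.
  case: (eqVneq (cst p c) x) => [e|hx].
    have eyx : y = x by rewrite (hcc y) -?e // -hxy e.
    by rewrite e eyx tr_a.
  case: (eqVneq (cst p c) y) => [e|hy].
    have exy : x = y by rewrite (hcc x) -?e // hxy e.
    by rewrite e exy tr_b.
  by apply: tr_o; apply/eqP.
Qed.

Lemma L1b p (x y : 'I_n) : in_Omega L t sz p ->
  automorphism (fstr_str (Np p)) (tr x y) -> p x = p y.
Proof.
move=> hp haut.
pose u : X := ep p x; pose v : X := ep p y.
rewrite -(ep_cls x hp) -(ep_cls y hp) -/u -/v.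
case: (eqVneq (cls u) (cls v)) => [//|hne].
have huv : u != v by apply: contraNneq hne => ->.
have hxy : x != y by apply: contraNneq huv => e; rewrite /u /v e.
apply/cls_sim => f fu fv fo.
have -> : f = tr u v.
  apply: functional_extensionality => z; rewrite /tr.
  case: (eqVneq (z : X) u) => [->//|hzu]; case: (eqVneq (z : X) v) => [->//|hzv].
  by apply: fo => e; [move: hzu | move: hzv]; rewrite e eqxx.
apply: (@aut_tr_iso L X M).
- move=> R w hw.
  case: (decomp (w : 'I_(lar R) -> X) [:: u; v]) => s [a [idx [ia [hwa [hex hcnt]]]]].
  case: (hex u) => [|ju hju]; first by rewrite inE eqxx.
  case: (hex v) => [|jv hjv]; first by rewrite !inE eqxx orbT.
  have hjj : ju != jv by apply: contraNneq huv => e; rewrite -hju -hjv e.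
  pose b0 := fun j => if j == ju then x else y.
  have hcc : forall i, #|[set j | cls (a j) == i]| <= #|[set z | p z == i]|.
    move=> i; case: (ltnP i t) => hi; first by rewrite block_fin // count_fin.
    apply: leq_trans _ (block_inf hp hi).
    apply: leq_trans (hcnt (fun z => cls z == i)) _.
    have h1 : (cls u == i) + (cls v == i) <= 1.
      by case: (eqVneq (cls u) i) => [e|]; case: (eqVneq (cls v) i) => [e'|] //;
        move: hne; rewrite e e' eqxx.
    have h2 : #|[set j | cls (w j) == i]| <= K.
      by apply: leq_trans (max_card _) _; rewrite card_ord ar_le_K.
    by rewrite /= addn0 -add1n leq_add.
  case: (@ext_fin n s k (fun j => cls (a j)) p hcc [set ju; jv] b0).
  + move=> j1 j2; rewrite !inE /b0.
    by move=> /orP[/eqP->|/eqP->] /orP[/eqP->|/eqP->];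
      rewrite ?eqxx ?(negPf hjj) ?(eq_sym jv ju) ?(negPf hjj) // => e;
      move: hxy; rewrite e eqxx.
  + move=> j; rewrite !inE /b0 => /orP [/eqP ->|/eqP ->].
      by rewrite eqxx hju ep_cls.
    by rewrite eq_sym (negPf hjj) hjv ep_cls.
  move=> b [ib [hb hbJ]].
  have bju : b ju = x by rewrite hbJ ?inE ?eqxx // /b0 eqxx.
  have bjv : b jv = y.
    by rewrite hbJ ?inE ?eqxx ?orbT // /b0 eq_sym (negPf hjj).
  pose phi := @ARel L s R (fun j => TVar L (idx j)).
  have e1 : w = (fun j => a (idx j)) by apply: functional_extensionality.
  suff hs : srel M (fun j => tr u v (a (idx j))).
    by move: hs; congr (srel M _); apply: functional_extensionality => j /=; rewrite hwa.
  move: hw; rewrite e1 => hw.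
  change (holds M (fun j => tr u v (a j)) phi).
  have h1 : holds M a phi := hw.
  have h2 : holds (fstr_str (Np p)) b phi by apply/(Np_compat0 phi hp ib ia hb).
  have h3 : holds (fstr_str (Np p)) (tr x y \o b) phi.
    by apply/(iso_holds _ _ haut).
  apply: (proj1 (@Np_compat0 p s (tr x y \o b) (fun j => tr u v (a j)) phi hp _ _ _) h3).
  + by move=> j1 j2 /= /tr_inj /ib.
  + by move=> j1 j2 /tr_inj /ia.
  + move=> j /=; case: (eqVneq j ju) => [->|hj1].
      by rewrite bju hju !tr_a /v ep_cls.
    case: (eqVneq j jv) => [->|hj2].
      by rewrite bjv hjv !tr_b /u ep_cls.
    have na1 : a j <> u by move=> e; move: hj1; rewrite -hju in e; rewrite (ia _ _ e) eqxx.
    have na2 : a j <> v by move=> e; move: hj2; rewrite -hjv in e; rewrite (ia _ _ e) eqxx.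
    have nb1 : b j <> x by move=> e; move: hj1; rewrite -bju in e; rewrite (ib _ _ e) eqxx.
    have nb2 : b j <> y by move=> e; move: hj2; rewrite -bjv in e; rewrite (ib _ _ e) eqxx.
    by rewrite !tr_o.
- move=> c.
  have hc := proj2 (proj2 haut) c; rewrite Np_cst in hc.
  case: (eqVneq (scst M c : X) u) => [e|hu].
    have ec : cst p c = x by apply: (ep_inj hp); rewrite ep_cst //; exact: e.
    by move: hc; rewrite ec tr_a => eyx; move: hxy; rewrite eyx eqxx.
  case: (eqVneq (scst M c : X) v) => [e|hv].
    have ec : cst p c = y by apply: (ep_inj hp); rewrite ep_cst //; exact: e.
    by move: hc; rewrite ec tr_b => eyx; move: hxy; rewrite eyx eqxx.
  by rewrite tr_o //; apply/eqP.
Qed.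

Lemma count_inf s (a : 'I_s -> X) (R : lrel L) (w : 'I_(lar R) -> X) (i : 'I_k) :
  (forall P : pred X, #|[set j | P (a j)]| <= count P [::] + #|[set j | P (w j)]|) ->
  #|[set j | cls (a j) == i]| <= K.
Proof.
move=> h; apply: leq_trans (h (fun z => cls z == i)) _.
by rewrite /= add0n; apply: leq_trans (max_card _) _; rewrite card_ord ar_le_K.
Qed.

Lemma core p q : in_Omega L t sz p -> in_Omega L t sz q -> Np p = Np q ->
  exists sg : {perm 'I_k}, in_AutStar M cls sg /\ forall x, q x = sg (p x).
Proof.
move=> hp hq epq.
have same x y : (p x == p y) = (q x == q y).
  apply/eqP/eqP => h.
  - by apply: (L1b hq); rewrite -epq; apply: L1a.
  - by apply: (L1b hp); rewrite epq; apply: L1a.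
pose w i := odflt x0 [pick x | p x == i].
have wP i : p (w i) = i.
  case: (block_ne i hp) => x hx; rewrite /w; case: pickP => [y /eqP //|h].
  by move: (h x); rewrite hx eqxx.
pose f i := q (w i).
have fP x : q x = f (p x).
  by apply/eqP; rewrite -same wP.
have finj : injective f.
  by move=> i j /eqP; rewrite /f -same !wP => /eqP.
pose sg := perm finj.
have hx x : q x = sg (p x) by rewrite permE fP.
have blk (i : 'I_k) : #|[set x | q x == sg i]| = #|[set x | p x == i]|.
  by apply: eq_card => x; rewrite !inE hx (inj_eq (@perm_inj _ sg)).
have fin_iff (i : 'I_k) : (i < t) = (sg i < t).
  case: (ltnP i t) => hi; case: (ltnP (sg i) t) => hs //.
  - have := block_inf hq hs; rewrite blk block_fin // ltnNge sz_le_K //.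
  - have := block_inf hp hi; rewrite -blk block_fin // ltnNge sz_le_K //.
have szeq (i : 'I_k) : i < t -> sz i = sz (sg i).
  move=> hi; have hs : sg i < t by rewrite -fin_iff.
  by rewrite -(block_fin hp hi) -blk block_fin.
pose hf i := proj1_sig (constructive_indefinite_description _
               (classbij (fin_iff i) (szeq i))).
have hfP i := proj2_sig (constructive_indefinite_description _
               (classbij (fin_iff i) (szeq i))).
pose F (z : X) : X := hf (cls z) z.
have clsF z : cls (F z) = sg (cls z) by apply: (proj1 (hfP (cls z))).
have Finj : injective F.
  move=> z z' e.
  have ec : cls z' = cls z.
    by apply: (@perm_inj _ sg); rewrite -!clsF e.
  move: e; rewrite /F ec; apply: (proj1 (proj2 (hfP (cls z)))) => //.
have Fsurj y : exists z, F z = y.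
  pose i := (sg^-1)%g (cls y).
  have hy : cls y = sg i by rewrite /i permKV.
  case: (proj2 (proj2 (hfP i)) y hy) => z [hz e].
  by exists z; rewrite /F hz.
pose G y := proj1_sig (constructive_indefinite_description _ (Fsurj y)).
have FG : cancel G F.
  by move=> y; exact: (proj2_sig (constructive_indefinite_description _ (Fsurj y))).
have GF : cancel F G by move=> z; apply: Finj; rewrite FG.
have Faut : automorphism M F.
  split; first exact: (Bijective GF FG).
  split.
  - move=> R w0.
    case: (decomp (w0 : 'I_(lar R) -> X) [::]) => s [a [idx [ia [hwa [_ hcnt]]]]].
    have hcc : forall i, #|[set j | cls (a j) == i]| <= #|[set z | p z == i]|.
      move=> i; case: (ltnP i t) => hi; first by rewrite block_fin // count_fin.
      exact: leq_trans (count_inf i hcnt) (ltnW (block_inf hp hi)).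
    case: (@ext_fin n s k (fun j => cls (a j)) p hcc set0 (fun _ => x0)).
    + by move=> j1 j2; rewrite inE.
    + by move=> j; rewrite inE.
    move=> b [ib [hb _]].
    pose phi := @ARel L s R (fun j => TVar L (idx j)).
    have E1 : srel M w0 = holds M a phi.
      by rewrite /=; congr (srel M _); apply: functional_extensionality => j.
    have E2 : srel M (F \o w0) = holds M (fun j => F (a j)) phi.
      by rewrite /=; congr (srel M _); apply: functional_extensionality => j /=; rewrite hwa.
    rewrite E1 E2.
    rewrite -(Np_compat0 phi hp ib ia hb) epq.
    apply: (Np_compat0 phi hq ib).
    + by move=> j1 j2 /Finj /ia.
    + by move=> j; rewrite hx hb clsF.
  - move=> c.
    have ecst : cst p c = cst q c by rewrite -!Np_cst epq.
    have h1 : p (cst p c) = cls (scst M c) by rewrite -ep_cls // ep_cst.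
    have h2 : q (cst p c) = cls (scst M c) by rewrite ecst -ep_cls // ep_cst.
    apply: const_class; rewrite clsF -h1 -hx h2 //.
exists sg; split => //.
exists F; split => // i; split.
- by move=> z <-; rewrite clsF.
- move=> y hy; case: (proj2 (proj2 (hfP i)) y hy) => z [hz e].
  by exists z; split => //; rewrite /F hz.
Qed.

Lemma sg_fin (sg : {perm 'I_k}) (j : 'I_k) : in_AutStar M cls sg ->
  ((j < t) = (sg j < t)) /\ (j < t -> sz j = sz (sg j)).
Proof.
move=> ha; case: (ltnP j t) => hj.
- have hc := autstar_class ha (fin_card hj).
  have hs : sg j < t.
    by rewrite ltnNge; apply/negP => hs; apply: (inf_card hs); exists (sz j).
  split; first by rewrite hs.
  by move=> _; apply: (class_card_uniq hc); apply: fin_card.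
- have hs : ~~ (sg j < t).
    apply/negP => hs; apply: (inf_card hj); exists (sz (sg j)).
    by apply: (autstar_class_inv ha); apply: fin_card.
  split; first by rewrite (negPf hs); apply/negbTE.
  by [].
Qed.

Lemma Dlem (sg : {perm 'I_k}) p : in_AutStar M cls sg -> in_Omega L t sz p ->
  in_Omega L t sz [ffun x => sg (p x)] /\ Np [ffun x => sg (p x)] = Np p.
Proof.
move=> ha hp.
have hO : in_Omega L t sz [ffun x => sg (p x)].
  apply/forallP => i; pose j := (sg^-1)%g i.
  have hij : i = sg j by rewrite /j permKV.
  have ec : #|[set x | [ffun x => sg (p x)] x == i]| = #|[set x | p x == j]|.
    by apply: eq_card => x; rewrite !inE ffunE hij (inj_eq (@perm_inj _ sg)).
  case: (sg_fin j ha) => e1 e2.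
  have := forallP hp j; rewrite ec hij -e1.
  by case: (ltnP j t) => hj //; rewrite e2.
split=> //; apply: esym; apply: C1 => // s phi b a ib ia hc.
case: ha => f [faut hf].
rewrite Np_holds // -(iso_holds _ phi faut); apply: PL => //.
- have [fb _] := faut.
  move=> x y /= /(bij_inj fb) /(ep_inj hp) /ib //.
- by move=> j /=; rewrite (proj1 (hf (p (b j))) _ (ep_cls _ hp)) -hc ffunE.
Qed.

Lemma ffun_comp_inj (p : {ffun 'I_n -> 'I_k}) : in_Omega L t sz p ->
  injective (fun sg : {perm 'I_k} => [ffun x => sg (p x)]).
Proof.
move=> hp s1 s2 e; apply/permP => i; case: (block_ne i hp) => x <-.
by move/ffunP: e => /(_ x); rewrite !ffunE.
Qed.


Lemma counting :
  exists cnt aut : nat,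
    Pcard (fun N : fstr L n => H (fstr_str N) /\
                               compatible M t cls sz (fstr_str N)) cnt /\
    Pcard (fun sigma : {perm 'I_k} => in_AutStar M cls sigma) aut /\
    cnt * aut = #|[set p : {ffun 'I_n -> 'I_k} | in_Omega L t sz p]| /\ 0 < aut.
Proof.
pose Om := [set p : {ffun 'I_n -> 'I_k} | in_Omega L t sz p].
pose C := [set N : fstr L n | pb (H (fstr_str N) /\
                               compatible M t cls sz (fstr_str N))].
pose G := [set sg : {perm 'I_k} | pb (in_AutStar M cls sg)].
have CP N : N \in C <-> (H (fstr_str N) /\ compatible M t cls sz (fstr_str N)).
  by rewrite inE pbP.
have GP sg : sg \in G <-> in_AutStar M cls sg by rewrite inE pbP.
have main : #|Om| = #|C| * #|G|.
  rewrite -sum1_card (partition_big Np (mem C)); last first.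
    move=> p hp0; have hp : in_Omega L t sz p.
      move: hp0; rewrite /Om -[pred_of_set.body _]/(pred_of_set _) -[finset.body _]/(finset _) inE //.
    change (Np p \in C); apply/CP.
    by split; [apply: Np_H | apply: Np_compat].
  rewrite -sum_nat_const; apply: eq_bigr => N /CP [_ [p0 [hp0 hc0]]].
  have eN : N = Np p0 by apply: C1.
  rewrite sum1_card.
  rewrite -(@card_in_imset _ _ (fun sg : {perm 'I_k} => [ffun x => sg (p0 x)]) (mem G)); last first.
    by move=> s1 s2 _ _; apply: ffun_comp_inj.
  apply: eq_card => p; transitivity ((p \in Om) && (Np p == N)); first by [].
  rewrite inE eN; apply/idP/idP.
  - case/andP=> hp /eqP ep.
    case: (core hp0 hp (esym ep)) => sg [hsg hx].
    apply/imsetP; exists sg; first by apply/GP.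
    by apply/ffunP => x; rewrite ffunE hx.
  - case/imsetP => sg /GP hsg ->.
    by case: (Dlem hsg hp0) => -> ->; rewrite eqxx.
have Gpos : 0 < #|G|.
  apply/card_gt0P; exists 1%g; apply/GP.
  exists id; split.
  - split; first exact: (Bijective (fun x => erefl x) (fun x => erefl x)).
    by split.
  - by move=> i; split=> [x ->|y hy]; rewrite ?perm1 //; exists y; rewrite -(perm1 i).
exists #|C|, #|G|; split; first by exists C.
split; first by exists G.
by rewrite main.
Qed.

End Main.

Unset Implicit Arguments.
Import GRing.Theory Num.Theory.

Theorem mainTheorem5 (L : lang) (H : Lclass L)
  (hH : hereditary H) (hnt : nontrivial H) (hb : basic H)
  (T : Type) (M : str L T) (hM : H T M) (hcount : countably_infinite T)
  (k t : nat) (cls : T -> 'I_k) (sz : nat -> nat)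
  (henum : class_enum M t cls sz) :
  exists n0 : nat, forall n : nat, (n0 <= n)%N ->
    exists cnt aut : nat,
      Pcard (fun N : fstr L n => H _ (fstr_str N) /\
                                 compatible M t cls sz (fstr_str N)) cnt /\
      Pcard (fun sigma : {perm 'I_k} => in_AutStar M cls sigma) aut /\
      ((cnt%:R : rat) =
        (#|[set p : {ffun 'I_n -> 'I_k} | in_Omega L t sz p]|%:R : rat)
        / (aut%:R : rat))%R.
Proof.
case: hcount => e0 he0.
exists 1 => n hn.
case: (@counting L T M k t cls sz henum e0 he0 n hn H hH hM)
  => cnt [aut [h1 [h2 [h3 h4]]]].
exists cnt, aut; split=> //; split=> //.
rewrite -h3 natrM mulfK //.
by rewrite pnatr_eq0 -lt0n.
Qed.
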